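(* Consider the censored delayed-feedback bandit model with threshold $m\ge1$ (see context) in which the sequence of pulled arms $(A_s)_{s\ge1}$ is fixed beforehand (deterministic, independent of all realizations). Let $k\in\{1,\dots,K\}$ and $t>0$ with $\tilde N_k(t)>0$. Then for any $\delta>0$, \[ \mathbb{P}\Big(\{\hat\theta_k(t)<\theta_k\}\cap\{\tilde N_k(t)\,d_{\mathrm{Pois}}(\hat\theta_k(t),\theta_k)>\delta\}\Big)<e^{-\delta}. \]
   Context: Censored delayed-feedback bandit model: $K$ arms with conversion rates $\theta_1,\dots,\theta_K\in[0,1]$; a delay distribution on $\mathbb{N}$ with CDF $\tau_d=\mathbb{P}(D\le d)$; threshold $m$. Pulling arm $A_s$ at round $s$ triggers independent $C_s\sim\mathrm{Bernoulli}(\theta_{A_s})$ and $D_s\sim\tau$ (independent across rounds); a conversion of the pull at round $s$ is observed at time $s+D_s$ only if $D_s\le m$. Define $\tilde N_k(t)=\tau_m\sum_{s=1}^{t-m}\mathbf{1}\{A_s=k\}+\sum_{s=t-m+1}^{t-1}\mathbf{1}\{A_s=k\}\tau_{t-s}$, $S_k(t)=\sum_{s=1}^{t-1}\mathbf{1}\{A_s=k\}C_s\mathbf{1}\{D_s\le\min(t-s,m)\}$ (the number of conversions of previous pulls of $k$ observed by time $t$), and $\hat\theta_k(t)=S_k(t)/\tilde N_k(t)$. $d_{\mathrm{Pois}}(p,q)=p\log(p/q)+q-p$ is the Poisson Kullback–Leibler divergence. *)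

(* Defs.v *)
From HB Require Import structures.
From mathcomp Require Import all_boot all_order all_algebra.
From mathcomp Require Import all_classical all_reals all_analysis.
Set Implicit Arguments. Unset Strict Implicit. Unset Printing Implicit Defensive.
Import Order.TTheory GRing.Theory Num.Theory.
Local Open Scope ring_scope.

Definition tauCDF (R : realType) (p : nat -> R) (d : nat) : R :=
  \sum_(0 <= i < d.+1) p i.

Definition Ntilde (R : realType) (K : nat) (A : nat -> 'I_K) (p : nat -> R)
  (m : nat) (k : 'I_K) (t : nat) : R :=
  tauCDF p m * (\sum_(1 <= s < (t - m).+1) (A s == k)%:R)
  + \sum_((t - m).+1 <= s < t) (A s == k)%:R * tauCDF p (t - s).

Definition Sk (R : realType) (T : Type) (K : nat) (A : nat -> 'I_K)
  (C : nat -> T -> bool) (D : nat -> T -> nat) (m : nat) (k : 'I_K) (t : nat)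
  (w : T) : R :=
  \sum_(1 <= s < t) ((A s == k) && C s w && (D s w <= minn (t - s) m)%N)%:R.

Definition thetahat (R : realType) (T : Type) (K : nat) (A : nat -> 'I_K)
  (p : nat -> R) (C : nat -> T -> bool) (D : nat -> T -> nat) (m : nat)
  (k : 'I_K) (t : nat) (w : T) : R :=
  Sk R A C D m k t w / Ntilde A p m k t.

Definition dPois (R : realType) (x q : R) : R := x * ln (x / q) + q - x.

Definition bernp (R : realType) (th : R) (c : bool) : R :=
  if c then th else 1 - th.

(* Main.v *)
Require Import Defs.
From HB Require Import structures.
From mathcomp Require Import all_boot all_order all_algebra.
From mathcomp Require Import all_classical all_reals all_analysis.
From mathcomp Require Import ring lra zify.
Import Order.TTheory GRing.Theory Num.Theory.
Local Open Scope classical_set_scope.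
Local Open Scope ring_scope.

Lemma prod_strict (R : realType) (n : nat) (a b : 'I_n -> R) (j : 'I_n) :
  (forall i, 0 <= a i <= b i) -> a j < b j -> (forall i, 0 < b i) ->
  \prod_(i < n) a i < \prod_(i < n) b i.
Proof.
move=> Hab Hj Hb.
rewrite (bigD1 j) //= [X in _ < X](bigD1 j) //=.
apply: (@le_lt_trans _ _ (a j * \prod_(i < n | i != j) b i)).
  apply: ler_wpM2l; first by case/andP: (Hab j).
  apply: ler_prod => i _; exact: Hab.
rewrite ltr_pM2r //; exact: prodr_gt0.
Qed.

Lemma chernoff (R : realType) (n : nat) (q : 'I_n -> R) (Bp : pred {ffun 'I_n -> bool}) (z Kc : R) :
  (forall i, 0 <= q i <= 1) -> 0 <= z -> z < 1 -> 0 < Kc -> (exists i, 0 < q i) ->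
  (forall b, Bp b -> 1 <= z ^+ (\sum_(i < n) (b i : nat)) * Kc) ->
  \sum_(b | Bp b) \prod_(i < n) (if b i then q i else 1 - q i)
    < Kc * expR ((\sum_(i < n) q i) * (z - 1)).
Proof.
move=> Hq z0 z1 K0 [j Hj] HB.
have W0 : forall b : {ffun 'I_n -> bool}, 0 <= \prod_(i < n) (if b i then q i else 1 - q i).
  move=> b; apply: prodr_ge0 => i _; case: (b i); have := Hq i; lra.
apply: (@le_lt_trans _ _ (\sum_(b : {ffun 'I_n -> bool})
   z ^+ (\sum_(i < n) (b i : nat)) * Kc * \prod_(i < n) (if b i then q i else 1 - q i))).
  rewrite [X in _ <= X](bigID Bp) /=.
  apply: (@le_trans _ _ (\sum_(b | Bp b)
   z ^+ (\sum_(i < n) (b i : nat)) * Kc * \prod_(i < n) (if b i then q i else 1 - q i))).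
    apply: ler_sum => b Hb; rewrite -[X in X <= _]mul1r; apply: ler_wpM2r => //.
    exact: HB.
  rewrite lerDl; apply: sumr_ge0 => b _; apply: mulr_ge0 => //.
  by apply: mulr_ge0; [apply: exprn_ge0|apply: ltW].
have E1 : forall b : {ffun 'I_n -> bool}, z ^+ (\sum_(i < n) (b i : nat)) * Kc *
   \prod_(i < n) (if b i then q i else 1 - q i) =
   Kc * \prod_(i < n) (z ^+ (b i : nat) * (if b i then q i else 1 - q i)).
  move=> b; rewrite big_split /= (big_morph (fun m => z ^+ m) (exprD z) (expr0 z)); ring.
under eq_bigr => b _ do rewrite E1.
rewrite -mulr_sumr ltr_pM2l //.
rewrite -(bigA_distr_bigA (fun (i : 'I_n) (c : bool) => z ^+ (c : nat) * (if c then q i else 1 - q i))) /=.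
rewrite mulr_suml (big_morph expR (@expRD R) (@expR0 R)).
apply: prod_strict.
- move=> i; rewrite big_bool /= expr1 expr0 mul1r.
  have := Hq i; move=> /andP [H1 H2]; apply/andP; split; first nra.
  have := expR_ge1Dx (q i * (z - 1)); lra.
- rewrite big_bool /= expr1 expr0 mul1r.
  have := expR_gt1Dx (x := q j * (z - 1)); rewrite mulf_eq0 negb_or.
  have -> : q j != 0 by rewrite gt_eqF.
  have -> : z - 1 != 0 by rewrite subr_eq0 lt_eqF.
  move=> /(_ isT); lra.
- by move=> i; apply: expR_gt0.
Qed.

Section Model.
Context (R : realType) (d : measure_display) (T : measurableType d)
  (P : probability T R) (K : nat) (theta : 'I_K -> R) (p : nat -> R)
  (A : nat -> 'I_K) (C : nat -> T -> bool) (D : nat -> T -> nat).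
Hypothesis mCD : forall s c e, measurable [set w | C s w = c /\ D s w = e].
Hypothesis indep : forall (n : nat) (s : 'I_n -> nat) (c : 'I_n -> bool) (e : 'I_n -> nat),
     injective s -> (forall i, (0 < s i)%N) ->
     P (\bigcap_(i in [set: 'I_n]) [set w | C (s i) w = c i /\ D (s i) w = e i])
     = (\prod_(i < n) (bernp (theta (A (s i))) (c i) * p (e i)))%:E.

Definition ev (s : nat) (Q : pred (bool * nat)) : set T := [set w | Q (C s w, D s w)].
Definition evs (l : seq (nat * pred (bool * nat))) : set T :=
  foldr (fun x E => ev x.1 x.2 `&` E) setT l.
Definition w1 s (u : bool * nat) : R := bernp (theta (A s)) u.1 * p u.2.
Definition wU s (U : seq (bool * nat)) : R := \sum_(u <- U) w1 s u.

Lemma ev_meas s Q : measurable (ev s Q).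
Proof.
have -> : ev s Q = \bigcup_(e in [set: nat])
   ((if Q (true, e) then [set w | C s w = true /\ D s w = e] else set0) `|`
    (if Q (false, e) then [set w | C s w = false /\ D s w = e] else set0)).
  apply/seteqP; split => w /=.
  - rewrite /ev /= => Hq; exists (D s w) => //.
    by case Hc: (C s w) Hq => Hq; [left|right]; rewrite Hq.
  - move=> [e _ [|]]; case: ifP => // Hq [Hc He]; by rewrite /ev /= Hc He.
apply: bigcup_measurable => e _; apply: measurableU; case: ifP => _ //.
Qed.

Lemma evs_meas l : measurable (evs l).
Proof. by elim: l => //= x l IH; apply: measurableI => //; apply: ev_meas. Qed.

Lemma evsE l : evs l = [set w | all (fun x => x.2 (C x.1 w, D x.1 w)) l].
Proof.
elim: l => [|x l IH] /=; first by apply/seteqP; split.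
rewrite IH; apply/seteqP; split => w /=; rewrite /ev /=.
- by move=> [-> ->].
- by move/andP => [-> ->].
Qed.

Definition pos (x : nat * (bool * nat)) := (0 < x.1)%N.

Lemma step1 (l : seq (nat * (bool * nat))) :
  uniq (map fst l) -> all (fun x => 0 < x.1)%N l ->
  P (evs [seq (x.1, (fun u => u == x.2)) | x <- l]) = (\prod_(x <- l) w1 x.1 x.2)%:E.
Proof.
move=> Hu Hpos.
pose x0 := (0%N, (false, 0%N)).
have Hinj : injective (fun i : 'I_(size l) => (nth x0 l i).1).
  move=> i j /= Hij; apply: val_inj => /=; apply/eqP.
  rewrite -(nth_uniq 0%N _ _ Hu) ?size_map //.
  by rewrite !(nth_map x0) // Hij.
have H := @indep (size l) (fun i : 'I_(size l) => (nth x0 l i).1) (fun i => (nth x0 l i).2.1) (fun i => (nth x0 l i).2.2) Hinj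
   (fun i => (all_nthP x0 Hpos) i (ltn_ord i)).
rewrite (big_nth x0) big_mkord -H; congr (P _).
rewrite evsE; apply/seteqP; split => w /=.
- rewrite all_map => Hall i _ /=.
  have := (all_nthP x0 Hall) i (ltn_ord i).
  case: (nth x0 l i) => s [c e] /=.
  by rewrite xpair_eqE => /andP [/eqP -> /eqP ->].
- move=> H2; rewrite all_map; apply/(all_nthP x0) => i Hi.
  have := H2 (Ordinal Hi) I; rewrite /=.
  case: (nth x0 l i) => s [c e] /= [-> ->].
  by rewrite !eqxx.
Qed.

Lemma boolA (a b c e : bool) : a && ((b || c) && e) = (b && a && e) || (a && (c && e)).
Proof. by case: a; case: b; case: c; case: e. Qed.

Lemma uniq_move (s : nat) (a b : seq nat) : uniq (a ++ s :: b) -> uniq (s :: (a ++ b)).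
Proof.
have H : perm_eq ([:: s] ++ a ++ b) (a ++ [:: s] ++ b) by apply/permPl; exact: perm_catCA.
by rewrite -(perm_uniq H).
Qed.

Lemma uniq_drop (s : nat) (a b : seq nat) : uniq (a ++ s :: b) -> uniq (a ++ b).
Proof. by move/uniq_move => /= /andP []. Qed.

Lemma step2 (l : seq (nat * seq (bool * nat))) (l0 : seq (nat * (bool * nat))) :
  uniq (map fst l0 ++ map fst l) -> all (fun x => 0 < x.1)%N l0 ->
  all (fun x => 0 < x.1)%N l -> all (fun x => uniq x.2) l ->
  P (evs [seq (x.1, (fun u => u == x.2)) | x <- l0] `&`
     evs [seq (x.1, (fun u => u \in x.2)) | x <- l])
  = (\prod_(x <- l0) w1 x.1 x.2 * \prod_(x <- l) wU x.1 x.2)%:E.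
Proof.
elim: l l0 => [|[s U] l IH] l0 Hu H0 Hl HU.
  by rewrite /= setIT big_nil mulr1 step1 // -(cats0 (map fst l0)).
move: Hl HU => /= /andP [Hs Hl] /andP [HUu HU].
elim: U HUu Hu => [|u U IHU] HUu Hu.
  rewrite big_cons /wU big_nil mul0r mulr0.
  have -> : evs [seq (x.1, (fun u => u == x.2)) | x <- l0] `&`
     (ev s (fun u => u \in [::]) `&` evs [seq (x.1, (fun u => u \in x.2)) | x <- l]) = set0.
    by apply/seteqP; split => w // [_ []].
  by rewrite measure0.
have -> : evs [seq (x.1, (fun u => u == x.2)) | x <- l0] `&`
     (ev s (fun v => v \in u :: U) `&` evs [seq (x.1, (fun u => u \in x.2)) | x <- l]) =
   (evs [seq (x.1, (fun u => u == x.2)) | x <- (s, u) :: l0] `&`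
     evs [seq (x.1, (fun u => u \in x.2)) | x <- l]) `|`
   (evs [seq (x.1, (fun u => u == x.2)) | x <- l0] `&`
     evs [seq (x.1, (fun u => u \in x.2)) | x <- (s, U) :: l]).
  rewrite /= !evsE /ev; apply/seteqP; split => w /=.
  - move=> [H1 [H2 H3]]; have : (all (fun x => x.2 (C x.1 w, D x.1 w))
       [seq (x.1, (fun u => u == x.2)) | x <- l0]) && ((((C s w, D s w) == u) ||
       ((C s w, D s w) \in U)) && all (fun x => x.2 (C x.1 w, D x.1 w))
       [seq (x.1, (fun u => u \in x.2)) | x <- l]).
      by rewrite H1 -in_cons H2 H3.
    rewrite boolA => /orP [/andP [/andP [-> ->] ->]|/andP [-> /andP [-> ->]]];
      by [left|right].
  - move=> [[[H1 H2] H3]|[H1 [H2 H3]]].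
      by split; [exact: H2|split; [rewrite in_cons H1|exact: H3]].
    by split; [exact: H1|split; [rewrite in_cons H2 orbT|exact: H3]].
rewrite measureU.
- have E1 := IH ((s, u) :: l0) (@uniq_move s (map fst l0) (map fst l) Hu) (introT andP (conj Hs H0)) Hl HU.
  have E2 := IHU (proj2 (andP HUu)) Hu.
  have -> : (\prod_(x <- l0) w1 x.1 x.2 * \prod_(x <- (s, u :: U) :: l) wU x.1 x.2)%:E =
    (\prod_(x <- (s, u) :: l0) w1 x.1 x.2 * \prod_(x <- l) wU x.1 x.2)%:E +
    (\prod_(x <- l0) w1 x.1 x.2 * \prod_(x <- (s, U) :: l) wU x.1 x.2)%:E.
    rewrite -EFinD /wU !big_cons /=; congr (_%:E); ring.
  by congr (_ + _); [exact: E1|exact: E2].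
- by apply: measurableI; apply: evs_meas.
- by apply: measurableI; apply: evs_meas.
- rewrite /= !evsE /ev; apply/seteqP; split => w //=.
  move=> [[[/eqP Hw _] _] [_ [HwU _]]].
  by move: HUu; rewrite /= -Hw HwU.
Qed.

Lemma step3 (l : seq (nat * (bool * seq (bool * nat)))) (l0 : seq (nat * seq (bool * nat))) :
  uniq (map fst l0 ++ map fst l) -> all (fun x => 0 < x.1)%N l0 ->
  all (fun x => 0 < x.1)%N l -> all (fun x => uniq x.2) l0 ->
  all (fun x => uniq x.2.2) l ->
  P (evs [seq (x.1, (fun u => u \in x.2)) | x <- l0] `&`
     evs [seq (x.1, (fun u => (u \in x.2.2) == x.2.1)) | x <- l])
  = (\prod_(x <- l0) wU x.1 x.2 *
     \prod_(x <- l) (if x.2.1 then wU x.1 x.2.2 else 1 - wU x.1 x.2.2))%:E.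
Proof.
elim: l l0 => [|[s [b U]] l IH] l0 Hu H0 Hl HU0 HU.
  rewrite /= setIT big_nil mulr1.
  have := @step2 l0 [::]; rewrite /= setTI big_nil mul1r => ->; rewrite //.
  by rewrite cats0 in Hu.
move: Hl HU => /= /andP [Hs Hl] /andP [HUu HU].
have Hu' := @uniq_move s (map fst l0) (map fst l) Hu.
have E2 := IH ((s, U) :: l0) Hu' (introT andP (conj Hs H0)) Hl
   (introT andP (conj HUu HU0)) HU.
have E1 := IH l0 (@uniq_drop s (map fst l0) (map fst l) Hu) H0 Hl HU0 HU.
clear Hu; case: b.
  transitivity (P (evs [seq (x.1, (fun u => u \in x.2)) | x <- (s, U) :: l0] `&`
     evs [seq (x.1, (fun u => (u \in x.2.2) == x.2.1)) | x <- l])).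
    congr (P _); rewrite /= !evsE /ev; apply/seteqP; split => w /=.
    - by move=> [H1 [H2 H3]]; rewrite eqb_id in H2.
    - by move=> [[H1 H2] H3]; rewrite eqb_id.
  rewrite E2 big_cons /= big_cons /=; congr (_%:E); ring.
have mX : measurable (evs [seq (x.1, (fun u => u \in x.2)) | x <- l0] `&`
     evs [seq (x.1, (fun u => (u \in x.2.2) == x.2.1)) | x <- l]).
  by apply: measurableI; apply: evs_meas.
transitivity (P ((evs [seq (x.1, (fun u => u \in x.2)) | x <- l0] `&`
     evs [seq (x.1, (fun u => (u \in x.2.2) == x.2.1)) | x <- l]) `\` ev s (fun u => u \in U))).
  congr (P _); rewrite /= !evsE /ev; apply/seteqP; split => w /=.
  - move=> [H1 [H2 H3]]; split => //; apply/negP.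
    by move: H2; case: (_ \in U).
  - move=> [[H1 H3] H2]; split => //; split => //.
    by move/negP: H2; case: (_ \in U).
rewrite measureD //; last 2 first.
- exact: ev_meas.
- exact: (le_lt_trans (probability_le1 P mX) (ltry 1)).
have -> : (evs [seq (x.1, (fun u => u \in x.2)) | x <- l0] `&`
     evs [seq (x.1, (fun u => (u \in x.2.2) == x.2.1)) | x <- l]) `&` ev s (fun u => u \in U)
   = evs [seq (x.1, (fun u => u \in x.2)) | x <- (s, U) :: l0] `&`
     evs [seq (x.1, (fun u => (u \in x.2.2) == x.2.1)) | x <- l].
  rewrite /= !evsE /ev; apply/seteqP; split => w /=.
  - by move=> [[H1 H3] H2].
  - by move=> [[H1 H2] H3].
apply: etrans; first exact: (congr2 (fun a b => (a - b)%E) E1 E2).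
rewrite -EFinB big_cons /= big_cons /=; congr (_%:E); ring.
Qed.

Lemma sub_sum (I : eqType) (r : seq I) (Q : pred I) (F : I -> set T) (E : set T) :
  (forall b, measurable (F b)) -> measurable E ->
  (forall w, E w -> exists2 b, (b \in r) && Q b & F b w) ->
  (P E <= \sum_(b <- r | Q b) P (F b))%E.
Proof.
elim: r E => [|b r IH] E mF mE HE.
  rewrite big_nil; have -> : E = set0.
    by apply/seteqP; split => w // /HE [].
  by rewrite measure0.
rewrite big_cons; case: ifP => Qb.
  rewrite (measureDI P mE (mF b)) addeC; apply: leeD.
    by apply: le_measure; rewrite ?inE //; apply: measurableI.
  apply: IH => //; first exact: measurableD.
  move=> w [/HE [b' /andP [Hb' Qb'] Fw] Fbw].
  exists b' => //; rewrite Qb' andbT.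
  move: Hb'; rewrite in_cons => /orP [/eqP Eb|//].
  by move: Fbw; rewrite -Eb.
apply: IH => // w /HE [b' /andP [Hb' Qb'] Fw].
exists b' => //; rewrite Qb' andbT.
move: Hb'; rewrite in_cons => /orP [/eqP Eb|//].
by move: Qb; rewrite -Eb Qb'.
Qed.

Lemma main (m : nat) (k : 'I_K) (t : nat) (delta : R) :
  (forall j, 0 <= theta j <= 1) -> (1 <= m)%N -> (0 < t)%N ->
  0 < Ntilde A p m k t -> 0 < delta ->
  (P [set w | (thetahat A p C D m k t w < theta k)%R /\
              (Ntilde A p m k t * dPois (thetahat A p C D m k t w) (theta k) > delta)%R]
   < (expR (- delta))%:E)%E.
Proof.
move=> Hth Hm Ht HN Hd.
set N := Ntilde A p m k t.
pose J := [seq s <- index_iota 1 t | A s == k].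
pose n := size J.
pose L s := minn (t - s) m.
pose Us s := [seq (true, e) | e <- iota 0 (L s).+1].
pose js (i : 'I_n) := nth 0%N J i.
pose q i := wU (js i) (Us (js i)).
pose Yb (b : {ffun 'I_n -> bool}) :=
  evs [seq (js i, (fun u => (u \in Us (js i)) == b i)) | i <- enum 'I_n].
pose y (b : {ffun 'I_n -> bool}) := (\sum_(i < n) (b i : nat))%N.
have HJpos : all (fun s => 0 < s)%N J.
  by apply/allP => s; rewrite mem_filter mem_index_iota => /andP [_ /andP [H _]].
have HJu : uniq J by apply: filter_uniq; apply: iota_uniq.
have HJk : forall i, A (js i) = k.
  move=> i; have : js i \in J by apply: mem_nth.
  by rewrite mem_filter => /andP [/eqP].
have HUu : forall s, uniq (Us s).
  by move=> s; rewrite map_inj_uniq ?iota_uniq // => e1 e2 [].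
have HmemU : forall s c e, ((c, e) \in Us s) = c && (e <= L s)%N.
  move=> s c e; apply/mapP/andP => [[e' He' [-> ->]]|[-> He]].
    by move: He'; rewrite mem_iota /= add0n ltnS.
  by exists e => //; rewrite mem_iota /= add0n ltnS.
have Hmapfst : [seq js i | i <- enum 'I_n] = J.
  have -> : [seq js i | i <- enum 'I_n] = [seq nth 0%N J i | i <- [seq val i | i <- enum 'I_n]].
    by rewrite -map_comp.
  by rewrite val_enum_ord map_nth_iota0 // take_size.
have Hpos_l : forall (f : 'I_n -> bool * seq (bool * nat)),
    all (fun x => 0 < x.1)%N [seq (js i, f i) | i <- enum 'I_n].
  move=> f; rewrite all_map.
  apply/allP => i _ /=; apply: (allP HJpos); exact: mem_nth.
have Huniq_l : forall (f : 'I_n -> bool * seq (bool * nat)),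
    uniq (map fst [seq (js i, f i) | i <- enum 'I_n]).
  by move=> f; rewrite -map_comp /= Hmapfst.
have HP : forall b, P (Yb b) = (\prod_(i < n) (if b i then q i else 1 - q i))%:E.
  move=> b.
  have H := @step3 [seq (js i, (b i, Us (js i))) | i <- enum 'I_n] [::]
    (Huniq_l _) isT (Hpos_l _) isT.
  rewrite /= setTI big_nil mul1r big_map big_enum /= in H.
  have HU' : all (fun x => uniq x.2.2) [seq (js i, (b i, Us (js i))) | i <- enum 'I_n].
    by rewrite all_map; apply/allP => i _ /=; apply: HUu.
  have {}H := H HU'.
  rewrite (_ : Yb b = evs [seq (x.1, fun u => (u \in x.2.2) == x.2.1) |
     x <- [seq (js i, (b i, Us (js i))) | i <- enum 'I_n]]); last by rewrite -map_comp.
  apply: etrans; first exact: H.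
  by [].
have Hq0 : forall i (c : bool), 0 <= (if c then q i else 1 - q i).
  move=> i c.
  have Hp1 : (0 < js i)%N by apply: (allP HJpos); exact: mem_nth.
  have H := @step3 [:: (js i, (c, Us (js i)))] [::] isT isT
    (introT andP (conj Hp1 isT)) isT (introT andP (conj (HUu (js i)) isT)).
  rewrite /= !big_cons !big_nil mul1r mulr1 in H.
  by rewrite -lee_fin -H.
have Hqval : forall i, q i = theta k * tauCDF p (L (js i)).
  move=> i; rewrite /q /wU /Us big_map /w1 /= HJk -big_distrr /tauCDF /=.
  by rewrite /index_iota subn0.
have HNsum : N = \sum_(i < n) tauCDF p (L (js i)).
  rewrite (_ : \sum_(i < n) tauCDF p (L (js i)) = \sum_(s <- J) tauCDF p (L s)); last first.
    by rewrite (big_nth 0%N) big_mkord.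
  rewrite big_filter big_mkcond /= /N /Ntilde.
  rewrite [RHS](@big_cat_nat _ _ _ (t - m).+1) //=; last by lia.
  congr (_ + _).
    rewrite big_distrr /=; apply: eq_big_nat => s /andP [H1 H2].
    have -> : L s = m by rewrite /L; lia.
    by case: (A s == k); rewrite ?mulr1 ?mulr0.
  apply: eq_big_nat => s /andP [H1 H2].
  have -> : L s = (t - s)%N by rewrite /L; lia.
  by case: (A s == k); rewrite ?mul1r ?mul0r.
have Hmu : theta k * N = \sum_(i < n) q i.
  by rewrite HNsum big_distrr; apply: eq_bigr => i _; rewrite Hqval.
have HYP : forall b w, Yb b w <->
    forall i, ((C (js i) w, D (js i) w) \in Us (js i)) == b i.
  move=> b w; rewrite /Yb evsE /= all_map; split => [/allP H i | H].
    by apply: H; rewrite mem_enum.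
  by apply/allP => i _; exact: H.
have HSk : forall b w, Yb b w -> Sk R A C D m k t w = (y b)%:R.
  move=> b w /HYP Hb; rewrite /Sk /y natr_sum.
  transitivity (\sum_(s <- J) (C s w && (D s w <= L s)%N)%:R : R).
    rewrite big_filter [RHS]big_mkcond /=; apply: eq_bigr => s _.
    by case: (A s == k).
  rewrite (big_nth 0%N) big_mkord; apply: eq_bigr => i _.
  by have := Hb i; rewrite HmemU => /eqP ->.
pose bw w : {ffun 'I_n -> bool} := [ffun i => (C (js i) w, D (js i) w) \in Us (js i)].
have HYcover : forall w, Yb (bw w) w.
  by move=> w; apply/HYP => i; rewrite ffunE.
have Hth_w : forall b w, Yb b w -> thetahat A p C D m k t w = (y b)%:R / N.
  by move=> b w Hw; rewrite /thetahat (HSk b w Hw).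
pose Bp (b : {ffun 'I_n -> bool}) := ((y b)%:R / N < theta k) &&
   (delta < N * dPois ((y b)%:R / N) (theta k)).
set E := (X in P X).
have HE : forall w, E w -> Bp (bw w).
  move=> w [H1 H2]; rewrite /Bp -(Hth_w _ _ (HYcover w)).
  by apply/andP; split.
have mE : measurable E.
  have -> : E = \bigcup_(b in [set b | Bp b]) Yb b.
    apply/seteqP; split => w.
    - by move=> Hw; exists (bw w); [exact: HE|exact: HYcover].
    - move=> [b Hb Hw]; rewrite /E /= (Hth_w _ _ Hw).
      by move: Hb => /= /andP [].
  apply: fin_bigcup_measurable; first exact: finite_finset.
  by move=> b _; exact: evs_meas.
apply: (le_lt_trans (@sub_sum _ (index_enum _) Bp Yb E _ mE _)).
- by move=> b; exact: evs_meas.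
- move=> w Hw; exists (bw w); last exact: HYcover.
  by rewrite mem_index_enum /=; exact: HE.
rewrite (eq_bigr _ (fun b _ => HP b)) sumEFin lte_fin.
have Hq01 : forall i, 0 <= q i <= 1.
  by move=> i; have := Hq0 i true; have := Hq0 i false => /= H1 H2; apply/andP; split; lra.
case: (boolP [exists b, Bp b]) => [/existsP [b0 Hb0] | /existsPn Hno]; last first.
  rewrite big_pred0; first exact: expR_gt0.
  by move=> b; apply/negbTE/Hno.
have [b1 Hb1 Hmax] := arg_maxnP y Hb0.
move/andP: Hb1 => [Hlt Hgt].
have y00 : 0 <= ((y b1)%:R : R) by rewrite ler0n.
have N0 : N != 0 by rewrite gt_eqF.
have th0 : 0 < theta k.
  apply: le_lt_trans Hlt; apply: divr_ge0 => //; exact: ltW.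
have th0' : theta k != 0 by rewrite gt_eqF.
have mu0 : 0 < theta k * N by apply: mulr_gt0.
have Hy0mu : (y b1)%:R < theta k * N by rewrite -ltr_pdivrMr.
have Hex : exists i, 0 < q i.
  case: (boolP [exists i, 0 < q i]) => [/existsP //| /existsPn Hn].
  have : \sum_(i < n) q i <= 0.
    by apply: sumr_le0 => i _; rewrite leNgt Hn.
  by rewrite -Hmu; lra.
have Hdp : forall x : R, N * dPois (x / N) (theta k) =
    x * ln (x / (theta k * N)) + theta k * N - x.
  move=> x; rewrite /dPois.
  have -> : x / N / theta k = x / (theta k * N) by field; apply/andP.
  by field.
rewrite Hdp in Hgt.
have [Hy|Hy] := eqVneq (y b1) 0%N.
  apply: (lt_le_trans (@chernoff R n q Bp 0 1 Hq01 (lexx 0) ltr01 ltr01 Hex _)).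
    move=> b Hb; have : (y b <= 0)%N by rewrite -Hy; exact: Hmax.
    rewrite leqn0 => /eqP Hb0'.
    by change (1 <= (0 : R) ^+ y b * 1); rewrite Hb0' expr0 mulr1.
  rewrite mul1r ler_expR -Hmu sub0r mulrN1.
  by rewrite Hy mul0r add0r subr0 in Hgt; lra.
set y0 : R := (y b1)%:R in y00 Hy0mu Hgt.
have y0p : 0 < y0 by rewrite /y0 ltr0n lt0n.
set z := y0 / (theta k * N) in Hgt.
have z0 : 0 < z by apply: divr_gt0.
have z1 : z < 1 by rewrite /z ltr_pdivrMr // mul1r.
set Kc := expR (- (y0 * ln z)).
apply: (lt_le_trans (@chernoff R n q Bp z Kc Hq01 (ltW z0) z1 (expR_gt0 _) Hex _)).
  move=> b Hb; have Hyb : (y b <= y b1)%N by exact: Hmax.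
  change (1 <= z ^+ y b * Kc).
  apply: (le_trans _ (ler_wpM2r (ltW (expR_gt0 _)) (ler_wiXn2l (ltW z0) (ltW z1) Hyb))).
  have -> : z ^+ y b1 = expR (y0 * ln z).
    by rewrite expRM_natl lnK // posrE.
  by rewrite /Kc -expRD addrN expR0.
rewrite /Kc -expRD ler_expR -Hmu.
have -> : theta k * N * (z - 1) = y0 - theta k * N.
  by rewrite mulrBr mulr1 (mulrC _ z) /z divfK // gt_eqF.
lra.
Qed.


End Model.

Theorem lemma7 (R : realType) (d : measure_display) (T : measurableType d)
  (P : probability T R) (K : nat) (theta : 'I_K -> R) (p : nat -> R)
  (m : nat) (A : nat -> 'I_K) (C : nat -> T -> bool) (D : nat -> T -> nat)
  (k : 'I_K) (t : nat) (delta : R) :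
  (forall j, 0 <= theta j <= 1) ->
  (1 <= m)%N ->
  (* the events {C_s = c, D_s = e} are measurable *)
  (forall s c e, measurable [set w | C s w = c /\ D s w = e]) ->
  (* (C_s, D_s)_{s >= 1} independent, C_s ~ Bernoulli(theta_{A_s}),
     D_s ~ delay law with pmf p, C_s independent of D_s *)
  (forall (n : nat) (s : 'I_n -> nat) (c : 'I_n -> bool) (e : 'I_n -> nat),
     injective s -> (forall i, (0 < s i)%N) ->
     P (\bigcap_(i in [set: 'I_n]) [set w | C (s i) w = c i /\ D (s i) w = e i])
     = (\prod_(i < n) (bernp (theta (A (s i))) (c i) * p (e i)))%:E) ->
  (0 < t)%N ->
  0 < Ntilde A p m k t ->
  0 < delta ->
  (P [set w | (thetahat A p C D m k t w < theta k)%R /\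
              (Ntilde A p m k t * dPois (thetahat A p C D m k t w) (theta k) > delta)%R]
   < (expR (- delta))%:E)%E.
Proof.
move=> Hth Hm HmCD Hind Ht HN Hd.
exact: (@main R d T P K theta p A C D HmCD Hind m k t delta Hth Hm Ht HN Hd).
Qed.
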